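(* Let $N\geq 1$, let $U\in M_{2N}(\mathbb{C})$ be unitary with $U^{\rm T}=-U$, and let $\Phi^U_{4N}$ be the map defined on block matrices $X=\begin{pmatrix} X_{11} & X_{12}\\ X_{21} & X_{22}\end{pmatrix}$ ($X_{kl}\in M_{2N}(\mathbb{C})$) by $$\Phi^U_{4N}(X)=\frac{1}{2N}\begin{pmatrix} \mathbb{I}_{2N}\,\mathrm{Tr}X_{22} & -\big(X_{12}+UX_{21}^{\rm T}U^\dagger\big)\\ -\big(X_{21}+UX_{12}^{\rm T}U^\dagger\big) & \mathbb{I}_{2N}\,\mathrm{Tr}X_{11}\end{pmatrix}.$$ Let $W=W^U_{4N}=(\mathrm{id}\otimes\Phi^U_{4N})P^+_{4N}$, where $P^+_{4N}=\frac{1}{4N}\sum_{k,l=1}^{4N}|k\rangle\langle l|\otimes|k\rangle\langle l|$. Then $W$ is a nondecomposable entanglement witness: $\langle\psi\otimes\phi|W|\psi\otimes\phi\rangle\geq 0$ for all $\psi,\phi\in\mathbb{C}^{4N}$, $W$ is not positive semidefinite, and there exists a density matrix $\rho$ on $\mathbb{C}^{4N}\otimes\mathbb{C}^{4N}$ with positive semidefinite partial transpose $\rho^\Gamma\geq 0$ such that $\mathrm{Tr}(W\rho)<0$.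
   Context: $\{|k\rangle\}$ is the standard basis of $\mathbb{C}^{4N}$; $\mathrm{id}$ is the identity map on $M_{4N}(\mathbb{C})$; $\rho^\Gamma$ denotes the partial transpose of $\rho$ with respect to one tensor factor. A density matrix is a positive semidefinite matrix of trace one. *)

(* Defs.v *)
From HB Require Import structures.
From mathcomp Require Import all_boot all_order all_algebra.
From mathcomp Require Import sesquilinear spectral.
From mathcomp Require mxtens.

Set Implicit Arguments.
Unset Strict Implicit.
Unset Printing Implicit Defensive.

Import Order.TTheory GRing.Theory Num.Theory.
Local Open Scope ring_scope.

(* Kronecker product, standard ordering: index (i,j) |-> i*n + j. *)
Notation "A *t B" := (mxtens.tensmx A B)
  (at level 40, left associativity, format "A  *t  B") : ring_scope.

Definition adjmx {C : numClosedFieldType} m n (A : 'M[C]_(m, n)) : 'M[C]_(n, m) :=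
  (map_mx Num.conj A)^T.

Definition psdmx {C : numClosedFieldType} n (A : 'M[C]_n) : Prop :=
  adjmx A = A /\ forall v : 'cV[C]_n, 0 <= (adjmx v *m A *m v) 0 0.

Definition densitymx {C : numClosedFieldType} n (rho : 'M[C]_n) : Prop :=
  psdmx rho /\ \tr rho = 1.

(* partial transpose w.r.t. the second tensor factor of C^m (x) C^n *)
Definition ptrans {C : numClosedFieldType} m n (rho : 'M[C]_(m * n)) : 'M[C]_(m * n) :=
  \matrix_(a, b)
    rho (mxtens.mxtens_index ((mxtens.mxtens_unindex a).1, (mxtens.mxtens_unindex b).2))
        (mxtens.mxtens_index ((mxtens.mxtens_unindex b).1, (mxtens.mxtens_unindex a).2)).

(* the map Phi^U_{4N} on 'M_(2N + 2N), with blocks of size M = 2N *)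
Definition PhiU {C : numClosedFieldType} (M : nat) (U : 'M[C]_M)
  (X : 'M[C]_(M + M)) : 'M[C]_(M + M) :=
  let X11 := ulsubmx X in let X12 := ursubmx X in
  let X21 := dlsubmx X in let X22 := drsubmx X in
  (M%:R)^-1 *:
    block_mx ((\tr X22)%:M) (- (X12 + U *m X21^T *m adjmx U))
             (- (X21 + U *m X12^T *m adjmx U)) ((\tr X11)%:M).

Definition Pplus {C : numClosedFieldType} (n : nat) : 'M[C]_(n * n) :=
  (n%:R)^-1 *: \sum_(k < n) \sum_(l < n) (delta_mx k l *t delta_mx k l).

(* (id (x) Phi) applied to Y : 'M_(n*n) *)
Definition id_tens {C : numClosedFieldType} (n : nat) (Phi : 'M[C]_n -> 'M[C]_n)
  (Y : 'M[C]_(n * n)) : 'M[C]_(n * n) :=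
  \sum_(k < n) \sum_(l < n)
    (delta_mx k l *t
      Phi (\matrix_(a, b) Y (mxtens.mxtens_index (k, a)) (mxtens.mxtens_index (l, b)))).

(* Main.v *)
Require Import Defs.
From HB Require Import structures.
From mathcomp Require Import all_boot all_order all_algebra.
From mathcomp Require Import sesquilinear spectral.
From mathcomp Require mxtens.
From mathcomp Require Import ring.
Import Order.TTheory GRing.Theory Num.Theory.
Local Open Scope ring_scope.

Module Aux.
Set Implicit Arguments.
Unset Strict Implicit.
Unset Printing Implicit Defensive.
Section Scal.
Variable C : numClosedFieldType.

Lemma conj_sq_ge0 (x : C) : 0 <= x * x^*.
Proof. exact: mul_conjC_ge0. Qed.

Lemma real_sq_le (X Y : C) : X \is Num.real -> 0 <= Y -> X ^+ 2 <= Y ^+ 2 -> X <= Y.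
Proof.
move=> Xr Y0 H; have := real_leVge Xr (real0 C); case/orP => HX.
  exact: le_trans HX Y0.
by rewrite -(ler_sqr HX Y0).
Qed.

Lemma scal (a1 b1 a2 b2 A1 B1 A2 B2 : C) :
  0 <= A1 -> 0 <= B1 -> 0 <= A2 -> 0 <= B2 ->
  a1 * a1^* + b1 * b1^* <= B1 * A1 ->
  a2 * a2^* + b2 * b2^* <= B2 * A2 ->
  a1^* * a2 + a2^* * a1 + (b1 * b2^* + b2 * b1^*) <= A1 * B2 + A2 * B1.
Proof.
move=> hA1 hB1 hA2 hB2 h1 h2.
set z := a1^* * a2 + b1 * b2^*.
have zc : z^* = a1 * a2^* + b1^* * b2 by rewrite /z rmorphD !rmorphM /= !conjCK.
have -> : a1^* * a2 + a2^* * a1 + (b1 * b2^* + b2 * b1^*) = z + z^*.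
  by rewrite zc /z; ring.
apply: real_sq_le.
- by apply/CrealP; rewrite rmorphD /= conjCK addrC.
- by apply: addr_ge0; apply: mulr_ge0.
have E1 : (z + z^*) ^+ 2 = 4%:R * (z * z^*) - (z - z^*) * (z - z^*)^*.
  by rewrite rmorphB /= conjCK; ring.
have E2 : (a1 * a1^* + b1 * b1^*) * (a2 * a2^* + b2 * b2^*) - z * z^* =
   (a1 * b2^* - b1^* * a2) * (a1 * b2^* - b1^* * a2)^*.
  by rewrite zc rmorphB !rmorphM /= !conjCK /z; ring.
have L1 : (z + z^*) ^+ 2 <= 4%:R * (z * z^*).
  by rewrite E1 lerBlDr lerDl conj_sq_ge0.
have L2 : z * z^* <= (a1 * a1^* + b1 * b1^*) * (a2 * a2^* + b2 * b2^*).
  by rewrite -subr_ge0 E2 conj_sq_ge0.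
have L3 : (a1 * a1^* + b1 * b1^*) * (a2 * a2^* + b2 * b2^*) <= (B1 * A1) * (B2 * A2).
  apply: ler_pM => //; apply: addr_ge0; exact: conj_sq_ge0.
have L4 : (A1 * B2) * (A2 * B1) *+ 4 <= (A1 * B2 + A2 * B1) ^+ 2.
  exact: (real_leif_AGM2_scaled (ger0_real (mulr_ge0 hA1 hB2)) (ger0_real (mulr_ge0 hA2 hB1))).1.
apply: (le_trans L1); apply: le_trans L4.
have L5 : 4 * (z * z^*) <= 4 * (A1 * B2 * (A2 * B1)).
  apply: ler_wpM2l; first exact: ler0n.
  apply: (le_trans L2); apply: (le_trans L3).
  by rewrite le_eqVlt; apply/orP; left; apply/eqP; ring.
apply: le_trans L5 _.
by rewrite le_eqVlt; apply/orP; left; apply/eqP; ring.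
Qed.


Variable m : nat.
Definition dot (f g : 'I_m -> C) := \sum_i (f i)^* * g i.

Lemma dot_ge0 f : 0 <= dot f f.
Proof. by apply: sumr_ge0 => i _; rewrite mulrC mul_conjC_ge0. Qed.

Lemma dot_conj f g : (dot f g)^* = dot g f.
Proof.
rewrite /dot rmorph_sum /=; apply: eq_bigr => i _.
by rewrite rmorphM /= conjCK mulrC.
Qed.

Lemma dot_real f : (dot f f)^* = dot f f.
Proof. exact: dot_conj. Qed.

Lemma dot0 f : dot f f = 0 -> forall i, f i = 0.
Proof.
move=> /eqP; rewrite psumr_eq0 => [/allP H i|i _]; last by rewrite mulrC mul_conjC_ge0.
have := H i (mem_index_enum i); rewrite /= mulf_eq0 => /orP [|/eqP //].
by rewrite conjC_eq0 => /eqP.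
Qed.

Lemma dot_zero_l f g : (forall i, f i = 0) -> dot f g = 0.
Proof. by move=> H; rewrite /dot big1 // => i _; rewrite H rmorph0 mul0r. Qed.

Lemma dot_zero_r f g : (forall i, g i = 0) -> dot f g = 0.
Proof. by move=> H; rewrite /dot big1 // => i _; rewrite H mulr0. Qed.

Lemma bessel (q x y : 'I_m -> C) : dot x y = 0 -> dot y y = dot x x ->
  dot q x * (dot q x)^* + dot q y * (dot q y)^* <= dot q q * dot x x.
Proof.
move=> hxy hyy.
set al := dot x x; set c := dot x q; set d := dot y q.
have alr : al^* = al by exact: dot_real.
have hqx : dot q x = c^* by rewrite dot_conj.
have hqy : dot q y = d^* by rewrite dot_conj.
have hyx : dot y x = 0 by rewrite -dot_conj hxy rmorph0.
pose w i := al * q i - c * x i - d * y i.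
have Ew : dot w w = al * (al * dot q q - c * c^* - d * d^*).
  rewrite /dot.
  rewrite (eq_bigr (fun i =>
     al * al * ((q i)^* * q i) - al * c * ((q i)^* * x i) - al * d * ((q i)^* * y i)
     - c^* * al * ((x i)^* * q i) + c^* * c * ((x i)^* * x i) + c^* * d * ((x i)^* * y i)
     - d^* * al * ((y i)^* * q i) + d^* * c * ((y i)^* * x i) + d^* * d * ((y i)^* * y i)));
    last by move=> i _; rewrite /w !rmorphB !rmorphM /= alr; ring.
  rewrite !(big_split, sumrB) /= -!mulr_sumr.
  rewrite !sumrN -!mulr_sumr.
  rewrite -/(dot q q) -/(dot q x) -/(dot q y) -/(dot x q) -/(dot x x) -/(dot x y).
  rewrite -/(dot y q) -/(dot y x) -/(dot y y).
  rewrite hqx hqy hxy hyx hyy -/al -/c -/d.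
  ring.
have w0 : 0 <= al * (al * dot q q - c * c^* - d * d^*) by rewrite -Ew dot_ge0.
have al0 : 0 <= al by exact: dot_ge0.
have [al_eq0|al_ne0] := eqVneq al 0.
  have x0 := dot0 al_eq0.
  have y0 : forall i, y i = 0 by apply: dot0; rewrite hyy.
  by rewrite (dot_zero_r q x0) (dot_zero_r q y0) al_eq0 !mul0r addr0 mulr0.
have al_gt0 : 0 < al by rewrite lt_def al_ne0.
move: w0; rewrite pmulr_rge0 // subr_ge0 lerBrDr => H.
rewrite hqx hqy !conjCK -/al (mulrC c^*) (mulrC d^*) (mulrC (dot q q)).
by move: H; rewrite addrC.
Qed.


Lemma cs1 (q x : 'I_m -> C) :
  dot q x * (dot q x)^* <= dot q q * dot x x.
Proof.
set al := dot x x; set c := dot x q.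
have alr : al^* = al by exact: dot_real.
have hqx : dot q x = c^* by rewrite dot_conj.
pose w i := al * q i - c * x i.
have Ew : dot w w = al * (al * dot q q - c * c^*).
  rewrite /dot.
  rewrite (eq_bigr (fun i =>
     al * al * ((q i)^* * q i) - al * c * ((q i)^* * x i)
     - c^* * al * ((x i)^* * q i) + c^* * c * ((x i)^* * x i)));
    last by move=> i _; rewrite /w !rmorphB !rmorphM /= alr; ring.
  rewrite !(big_split, sumrB) /=.
  rewrite !sumrN -!mulr_sumr.
  rewrite -/(dot q q) -/(dot q x) -/(dot x q) -/(dot x x).
  rewrite hqx -/al -/c.
  ring.
have w0 : 0 <= al * (al * dot q q - c * c^*) by rewrite -Ew dot_ge0.
have al0 : 0 <= al by exact: dot_ge0.
have [al_eq0|al_ne0] := eqVneq al 0.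
  have x0 := dot0 al_eq0.
  by rewrite (dot_zero_r q x0) al_eq0 !mul0r mulr0.
have al_gt0 : 0 < al by rewrite lt_def al_ne0.
move: w0; rewrite pmulr_rge0 // subr_ge0 => H.
by rewrite hqx !conjCK -/al (mulrC c^*) (mulrC (dot q q)).
Qed.

End Scal.

Lemma cs_sum (C : numClosedFieldType) m (z : 'I_m -> C) :
  (\sum_i z i)^* * (\sum_i z i) <= m%:R * \sum_i (z i)^* * z i.
Proof.
have := cs1 (fun _ => 1) z; rewrite /dot.
under eq_bigr do rewrite rmorph1 mul1r.
under [X in _ <= X * _]eq_bigr do rewrite rmorph1 mul1r.
rewrite sumr_const card_ord => H.
by rewrite mulrC.
Qed.

Local Notation idx := mxtens.mxtens_index.
Local Notation unidx := mxtens.mxtens_unindex.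

Lemma sum_delta (R : pzRingType) (T : finType) (k0 : T) (F : T -> R) :
  \sum_k ((k0 == k)%:R * F k) = F k0.
Proof.
rewrite (bigD1 k0) //= eqxx mul1r big1 ?addr0 // => k /negbTE.
by rewrite eq_sym => ->; rewrite mul0r.
Qed.

Lemma sum_delta_r (R : comPzRingType) (T : finType) (k0 : T) (F : T -> R) :
  \sum_k (F k * (k0 == k)%:R) = F k0.
Proof. by rewrite -[RHS](sum_delta k0); apply: eq_bigr => k _; rewrite mulrC. Qed.

Lemma sum_pair (R : pzRingType) m n (F : 'I_(m * n) -> R) :
  \sum_(x < m * n) F x = \sum_(k < m) \sum_(a < n) F (idx (k, a)).
Proof.
rewrite pair_big /= (reindex (@mxtens.mxtens_index m n)) /=.
  by apply: eq_bigr => -[].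
by exists (@unidx m n) => i _; rewrite (mxtens.mxtens_indexK, mxtens.mxtens_unindexK).
Qed.

Section Main.
Variable C : numClosedFieldType.
Variable M : nat.
Variable U : 'M[C]_M.

Definition e (s : bool) (i : 'I_M) : 'I_(M + M) :=
  if s then rshift M i else lshift M i.

Lemma sum_n (F : 'I_(M + M) -> C) :
  \sum_(k < M + M) F k = \sum_(i < M) F (e false i) + \sum_(i < M) F (e true i).
Proof. exact: mxtens.sumr_add. Qed.

Lemma eq_e s i t j : (e s i == e t j) = (s == t) && (i == j).
Proof.
case: s; case: t => /=.
- by rewrite (inj_eq (@rshift_inj _ _)).
- apply/negbTE; apply/eqP => /(congr1 val) /= H.
  by have := ltn_ord j; rewrite -H ltnNge leq_addr.
- apply/negbTE; apply/eqP => /(congr1 val) /= H.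
  by have := ltn_ord i; rewrite H ltnNge leq_addr.
- by rewrite (inj_eq (@lshift_inj _ _)).
Qed.


Local Notation n := (M + M)%N.

Lemma Phi_FF X i j : PhiU U X (e false i) (e false j) =
  M%:R^-1 * ((\sum_c X (e true c) (e true c)) * (i == j)%:R).
Proof.
rewrite /PhiU /= mxE block_mxEul mxE /mxtrace; congr (_ * _).
by rewrite mulr_natr; congr (_ *+ _); apply: eq_bigr => c _; rewrite !mxE.
Qed.

Lemma Phi_TT X i j : PhiU U X (e true i) (e true j) =
  M%:R^-1 * ((\sum_c X (e false c) (e false c)) * (i == j)%:R).
Proof.
rewrite /PhiU /= mxE block_mxEdr mxE /mxtrace; congr (_ * _).
by rewrite mulr_natr; congr (_ *+ _); apply: eq_bigr => c _; rewrite !mxE.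
Qed.

Lemma Phi_FT X i j : PhiU U X (e false i) (e true j) =
  M%:R^-1 * - (X (e false i) (e true j) +
     \sum_d (\sum_c U i c * X (e true d) (e false c)) * (U j d)^*).
Proof.
rewrite /PhiU /= mxE block_mxEur !mxE; congr (_ * - (_ + _)).
apply: eq_bigr => d _; rewrite !mxE; congr (_ * _).
by apply: eq_bigr => c _; rewrite !mxE.
Qed.

Lemma Phi_TF X i j : PhiU U X (e true i) (e false j) =
  M%:R^-1 * - (X (e true i) (e false j) +
     \sum_d (\sum_c U i c * X (e false d) (e true c)) * (U j d)^*).
Proof.
rewrite /PhiU /= mxE block_mxEdl !mxE; congr (_ * - (_ + _)).
apply: eq_bigr => d _; rewrite !mxE; congr (_ * _).
by apply: eq_bigr => c _; rewrite !mxE.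
Qed.

Definition Y (k l : 'I_n) : 'M[C]_n :=
  \matrix_(a, b) (n%:R^-1 * ((k == a) && (l == b))%:R).

Lemma W_entry k a l b :
  id_tens (PhiU U) (Pplus n) (idx (k, a)) (idx (l, b)) = PhiU U (Y k l) a b.
Proof.
rewrite /id_tens summxE (bigD1 k) //= summxE (bigD1 l) //= big1; last first.
  by move=> l'; rewrite eq_sym => /negbTE Hl; rewrite mxtens.tensmxE mxE eqxx Hl /= mul0r.
rewrite big1; last first.
  move=> k'; rewrite eq_sym => /negbTE Hk; rewrite summxE big1 // => l' _.
  by rewrite mxtens.tensmxE mxE Hk /= mul0r.
rewrite !addr0 mxtens.tensmxE mxE !eqxx /= mul1r; congr (PhiU U _ a b).
apply/matrixP => a' b'; rewrite !mxE.
congr (_ * _); rewrite summxE (bigD1 k) //= summxE (bigD1 l) //= big1; last first.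
  by move=> l'; rewrite eq_sym => /negbTE Hl; rewrite mxtens.tensmxE mxE eqxx Hl /= mul0r.
rewrite big1; last first.
  move=> k'; rewrite eq_sym => /negbTE Hk; rewrite summxE big1 // => l' _.
  by rewrite mxtens.tensmxE mxE Hk /= mul0r.
by rewrite !addr0 mxtens.tensmxE !mxE !eqxx /= mul1r (eq_sym a') (eq_sym b').
Qed.

Definition fW (s : bool) (i : 'I_M) (t : bool) (c : 'I_M) (s' : bool) (j : 'I_M)
  (t' : bool) (d : 'I_M) : C :=
 match s, t, s', t' with
 | false, true, false, true => (i == j)%:R * (c == d)%:R
 | true, false, true, false => (i == j)%:R * (c == d)%:R
 | false, false, true, true => - ((c == i)%:R * (d == j)%:R)
 | true, true, false, false => - ((c == i)%:R * (d == j)%:R)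
 | false, true, true, false => - (U c j * (U d i)^*)
 | true, false, false, true => - (U c j * (U d i)^*)
 | _, _, _, _ => 0 end.

Lemma YE k l a b : Y k l a b = n%:R^-1 * ((k == a) && (l == b))%:R.
Proof. by rewrite mxE. Qed.

Lemma trY s i s' j u :
  \sum_c Y (e s i) (e s' j) (e u c) (e u c) =
  n%:R^-1 * ((s == u) && (s' == u) && (i == j))%:R.
Proof.
under eq_bigr => c _ do rewrite YE !eq_e.
rewrite -mulr_sumr; congr (_ * _).
case: (s == u); case: (s' == u) => /=; try by rewrite big1 // => c; rewrite ?andbF.
rewrite (bigD1 i) //= eqxx /= big1 ?addr0; first by rewrite eq_sym.
by move=> c; rewrite eq_sym => /negbTE ->.
Qed.

Lemma dblY s i s' j u v c d :
  \sum_d0 (\sum_c0 U c c0 * Y (e s i) (e s' j) (e u d0) (e v c0)) * (U d d0)^* =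
  n%:R^-1 * (((s == u) && (s' == v))%:R * (U c j * (U d i)^*)).
Proof.
under eq_bigr => d0 _ do under eq_bigr => c0 _ do rewrite YE !eq_e.
case: (s == u); case: (s' == v) => /=; rewrite ?mul0r ?mulr0;
  last 3 first.
- by rewrite big1 // => d0 _; rewrite big1 ?mul0r // => c0 _; rewrite andbF mulr0 mulr0.
- by rewrite big1 // => d0 _; rewrite big1 ?mul0r // => c0 _; rewrite mulr0.
- by rewrite big1 // => d0 _; rewrite big1 ?mul0r // => c0 _; rewrite mulr0.
rewrite (bigD1 i) //= [X in _ + X]big1 ?addr0; last first.
  move=> d0 /negbTE Hd; rewrite big1 ?mul0r // => c0 _.
  by rewrite eq_sym Hd /= mulr0 mulr0.
rewrite eqxx /= (bigD1 j) //= eqxx [X in _ + X]big1 ?addr0; last first.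
  by move=> c0 /negbTE Hc; rewrite eq_sym Hc /= mulr0 mulr0.
by rewrite mulr1 mul1r mulrCA mulrA.
Qed.

Lemma W_e s i t c s' j t' d :
  id_tens (PhiU U) (Pplus n) (idx (e s i, e t c)) (idx (e s' j, e t' d)) =
  M%:R^-1 * (n%:R^-1 * fW s i t c s' j t' d).
Proof.
rewrite W_entry.
case: t; case: t'; rewrite ?Phi_FF ?Phi_TT ?Phi_FT ?Phi_TF; congr (_ * _);
  rewrite ?trY ?dblY ?YE ?eq_e; case: s; case: s' => /=;
  rewrite ?andbF ?mul0r ?mulr0 ?mul1r ?addr0 ?add0r ?oppr0 ?mulrN ?mulrA ?mul0r //;
  by rewrite -mulrA -natrM mulnb (eq_sym c) (eq_sym d).
Qed.


Lemma sum_be (F : 'I_n -> C) : \sum_k F k = \sum_(s : bool) \sum_i F (e s i).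
Proof. by rewrite sum_n big_bool addrC. Qed.

Lemma sum4 (G : 'I_n -> 'I_n -> 'I_n -> 'I_n -> C) :
  \sum_k \sum_a \sum_l \sum_b G k a l b =
  \sum_(s : bool) \sum_(t : bool) \sum_(s' : bool) \sum_(t' : bool)
    \sum_i \sum_c \sum_j \sum_d G (e s i) (e t c) (e s' j) (e t' d).
Proof.
rewrite sum_be; apply: eq_bigr => s _.
under eq_bigr => i _ do rewrite sum_be.
rewrite exchange_big; apply: eq_bigr => t _.
under eq_bigr => i _ do (under eq_bigr => c _ do rewrite sum_be).
under eq_bigr => i _ do rewrite exchange_big.
rewrite exchange_big; apply: eq_bigr => s' _.
under eq_bigr => i _ do (under eq_bigr => c _ do (under eq_bigr => j _ do rewrite sum_be)).
under eq_bigr => i _ do (under eq_bigr => c _ do rewrite exchange_big).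
under eq_bigr => i _ do rewrite exchange_big.
rewrite exchange_big; apply: eq_bigr => t' _.
by [].
Qed.

Lemma sum0mul (G : 'I_M -> 'I_M -> 'I_M -> 'I_M -> C) :
  \sum_i \sum_c \sum_j \sum_d (0 * G i c j d) = 0.
Proof. by rewrite big1 // => i _; rewrite big1 // => c _; rewrite big1 // => j _; rewrite big1 // => d _; rewrite mul0r. Qed.

Definition Wm := id_tens (PhiU U) (Pplus n).

Lemma T_pre (Z : 'M[C]_(n * n)) :
  \sum_x \sum_y Wm x y * Z y x = M%:R^-1 * (n%:R^-1 *
  \sum_(s : bool) \sum_(t : bool) \sum_(s' : bool) \sum_(t' : bool)
    \sum_i \sum_c \sum_j \sum_d (fW s i t c s' j t' d *
       Z (idx (e s' j, e t' d)) (idx (e s i, e t c)))).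
Proof.
rewrite sum_pair.
under eq_bigr => k _ do (under eq_bigr => a _ do rewrite sum_pair).
rewrite sum4 !mulr_sumr; apply: eq_bigr => s _; rewrite !mulr_sumr; apply: eq_bigr => t _.
rewrite !mulr_sumr; apply: eq_bigr => s' _; rewrite !mulr_sumr; apply: eq_bigr => t' _.
rewrite !mulr_sumr; apply: eq_bigr => i _; rewrite !mulr_sumr; apply: eq_bigr => c _.
rewrite !mulr_sumr; apply: eq_bigr => j _; rewrite !mulr_sumr; apply: eq_bigr => d _.
by rewrite /Wm W_e !mulrA.
Qed.


Lemma sumD (G : 'I_M -> 'I_M -> 'I_M -> 'I_M -> C) :
  \sum_i \sum_c \sum_j \sum_d ((i == j)%:R * (c == d)%:R * G i c j d) =
  \sum_i \sum_c G i c i c.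
Proof.
apply: eq_bigr => i _; apply: eq_bigr => c _.
rewrite (bigD1 i) //= [X in _ + X]big1 ?addr0; last first.
  by move=> j /negbTE Hj; rewrite big1 // => d _; rewrite eq_sym Hj !mul0r.
by rewrite eqxx mulr1n; under eq_bigr do rewrite mul1r; rewrite sum_delta.
Qed.

Lemma sumO (G : 'I_M -> 'I_M -> 'I_M -> 'I_M -> C) :
  \sum_i \sum_c \sum_j \sum_d (- ((c == i)%:R * (d == j)%:R) * G i c j d) =
  - \sum_i \sum_j G i i j j.
Proof.
rewrite -sumrN; apply: eq_bigr => i _.
rewrite (bigD1 i) //= [X in _ + X]big1 ?addr0; last first.
  move=> c /negbTE Hc; rewrite big1 // => j _; rewrite big1 // => d _.
  by rewrite Hc !mul0r oppr0 mul0r.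
rewrite eqxx -sumrN; apply: eq_bigr => j _.
rewrite (bigD1 j) //= [X in _ + X]big1 ?addr0; last first.
  by move=> d /negbTE Hd; rewrite Hd mulr0 oppr0 mul0r.
by rewrite eqxx mul1r mulN1r.
Qed.

Lemma sumK (G : 'I_M -> 'I_M -> 'I_M -> 'I_M -> C) :
  \sum_i \sum_c \sum_j \sum_d (- (U c j * (U d i)^*) * G i c j d) =
  - \sum_i \sum_c \sum_j \sum_d (U c j * (U d i)^* * G i c j d).
Proof.
rewrite -sumrN; apply: eq_bigr => i _; rewrite -sumrN; apply: eq_bigr => c _.
rewrite -sumrN; apply: eq_bigr => j _; rewrite -sumrN; apply: eq_bigr => d _.
by rewrite mulNr.
Qed.

Local Notation L := (lshift M).
Local Notation R := (rshift M).

Definition D1 (Z : 'M[C]_(n * n)) := \sum_i \sum_c Z (idx (L i, R c)) (idx (L i, R c)).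
Definition D2 (Z : 'M[C]_(n * n)) := \sum_i \sum_c Z (idx (R i, L c)) (idx (R i, L c)).
Definition O1 (Z : 'M[C]_(n * n)) := \sum_i \sum_j Z (idx (L j, L j)) (idx (R i, R i)).
Definition O2 (Z : 'M[C]_(n * n)) := \sum_i \sum_j Z (idx (R j, R j)) (idx (L i, L i)).
Definition K1 (Z : 'M[C]_(n * n)) := \sum_i \sum_c \sum_j \sum_d
  (U c j * (U d i)^* * Z (idx (L j, R d)) (idx (R i, L c))).
Definition K2 (Z : 'M[C]_(n * n)) := \sum_i \sum_c \sum_j \sum_d
  (U c j * (U d i)^* * Z (idx (R j, L d)) (idx (L i, R c))).

Lemma T_master (Z : 'M[C]_(n * n)) :
  \sum_x \sum_y Wm x y * Z y x =
  M%:R^-1 * (n%:R^-1 * (D1 Z + D2 Z - O1 Z - O2 Z - K1 Z - K2 Z)).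
Proof.
rewrite T_pre !big_bool /= !sum0mul !add0r !addr0 !sumD !sumO !sumK.
rewrite /D1 /D2 /O1 /O2 /K1 /K2.
congr (_ * (_ * _)).
ring.
Qed.


Lemma qformE (A : 'M[C]_(n * n)) (v : 'cV[C]_(n * n)) :
  (adjmx v *m A *m v) 0 0 = \sum_x \sum_y A x y * (v *m adjmx v) y x.
Proof.
rewrite mxE; under eq_bigr => y _ do rewrite mxE mulr_suml.
rewrite exchange_big; apply: eq_bigr => x _; apply: eq_bigr => y _.
rewrite !mxE big_ord1 !mxE.
by rewrite -mulrA mulrC -mulrA.
Qed.
Lemma trE (A B : 'M[C]_(n * n)) : \tr (A *m B) = \sum_x \sum_y A x y * B y x.
Proof. by apply: eq_bigr => x _; rewrite mxE. Qed.

Lemma vvE (v : 'cV[C]_(n * n)) x y : (v *m adjmx v) y x = v y 0 * (v x 0)^*.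
Proof. by rewrite mxE big_ord1 !mxE. Qed.

Lemma sum_prod (f g : 'I_M -> C) :
  \sum_i \sum_c (f i * g c) = (\sum_i f i) * (\sum_c g c).
Proof. by rewrite mulr_suml; apply: eq_bigr => i _; rewrite mulr_sumr. Qed.

Lemma reorder (F : 'I_M -> 'I_M -> 'I_M -> 'I_M -> C) :
  \sum_i \sum_c \sum_j \sum_d F i c j d = \sum_c \sum_j \sum_d \sum_i F i c j d.
Proof.
rewrite exchange_big; apply: eq_bigr => c _.
rewrite exchange_big; apply: eq_bigr => j _.
by rewrite exchange_big.
Qed.

Lemma sum_prod4 (f g : 'I_M -> 'I_M -> C) :
  \sum_i \sum_c \sum_j \sum_d (f c j * g d i) =
  (\sum_c \sum_j f c j) * (\sum_d \sum_i g d i).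
Proof.
rewrite reorder mulr_suml; apply: eq_bigr => c _; rewrite mulr_suml.
apply: eq_bigr => j _; rewrite mulr_sumr; apply: eq_bigr => d _.
by rewrite mulr_sumr.
Qed.


Hypothesis hskew : forall i j : 'I_M, U j i = - U i j.
Hypothesis hcol : forall j k : 'I_M, \sum_c (U c j)^* * U c k = (j == k)%:R.

Lemma skew0 (p : 'I_M -> C) : \sum_c \sum_j p c * U c j * p j = 0.
Proof.
set S := \sum_c \sum_j _.
have HS : S = - S.
  rewrite {1}/S exchange_big /S -sumrN; apply: eq_bigr => a _.
  rewrite -sumrN; apply: eq_bigr => b _; rewrite hskew; ring.
have : S *+ 2 = 0 by rewrite mulr2n {1}HS addNr.
by move/eqP; rewrite mulrn_eq0 /= => /eqP.
Qed.

Lemma unit_norm (p : 'I_M -> C) :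
  dot (fun c => \sum_j U c j * p j) (fun c => \sum_j U c j * p j) = dot p p.
Proof.
rewrite /dot.
under eq_bigr => c _ do rewrite rmorph_sum mulr_suml.
under eq_bigr => c _ do (under eq_bigr => j _ do rewrite mulr_sumr).
rewrite exchange_big; apply: eq_bigr => j _.
rewrite exchange_big /=.
rewrite (eq_bigr (fun k => (p j)^* * p k * (j == k)%:R)); last first.
  move=> k _; rewrite -hcol mulr_sumr; apply: eq_bigr => c _.
  rewrite rmorphM /=; ring.
by rewrite sum_delta_r.
Qed.

Lemma vtE (psi phi : 'cV[C]_n) k a :
  (psi *t phi) (idx (k, a)) 0 = psi k 0 * phi a 0.
Proof.
rewrite mxE mxtens.mxtens_indexK /=.
by rewrite [X in psi k X]ord1 [X in phi a X]ord1.
Qed.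

Lemma pos_part (psi phi : 'cV[C]_n) :
  0 <= (adjmx (psi *t phi) *m Wm *m (psi *t phi)) 0 0.
Proof.
rewrite qformE T_master.
apply: mulr_ge0; first by rewrite invr_ge0 ler0n.
apply: mulr_ge0; first by rewrite invr_ge0 ler0n.
set Z := _ *m adjmx _.
pose p1 i := psi (L i) 0; pose p2 i := psi (R i) 0.
pose q1 i := phi (L i) 0; pose q2 i := phi (R i) 0.
have ZE k a l b : Z (idx (k, a)) (idx (l, b)) = psi k 0 * phi a 0 * (psi l 0 * phi b 0)^*.
  by rewrite /Z vvE !vtE.
pose s1 := \sum_i p1 i * q1 i; pose s2 := \sum_i p2 i * q2 i.
pose R1 := \sum_c \sum_j (q1 c)^* * (U c j * p1 j).
pose R2 := \sum_c \sum_j (q2 c)^* * (U c j * p2 j).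
have eD1 : D1 Z = dot p1 p1 * dot q2 q2.
  rewrite /D1 /dot -sum_prod; apply: eq_bigr => i _; apply: eq_bigr => c _.
  by rewrite ZE rmorphM /= /p1 /q2; ring.
have eD2 : D2 Z = dot p2 p2 * dot q1 q1.
  rewrite /D2 /dot -sum_prod; apply: eq_bigr => i _; apply: eq_bigr => c _.
  by rewrite ZE rmorphM /= /p2 /q1; ring.
have eO1 : O1 Z = s1 * s2^*.
  rewrite /O1 /s1 /s2 rmorph_sum mulrC -sum_prod; apply: eq_bigr => i _; apply: eq_bigr => j _.
  by rewrite ZE /= /p1 /q1 /p2 /q2; ring.
have eO2 : O2 Z = s2 * s1^*.
  rewrite /O2 /s1 /s2 rmorph_sum mulrC -sum_prod; apply: eq_bigr => i _; apply: eq_bigr => j _.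
  by rewrite ZE /= /p1 /q1 /p2 /q2; ring.
have eK1 : K1 Z = R1 * R2^*.
  rewrite /K1 /R1 /R2 !rmorph_sum /=.
  under [X in _ = _ * X]eq_bigr => c _ do rewrite rmorph_sum /=.
  rewrite -sum_prod4; apply: eq_bigr => i _; apply: eq_bigr => c _.
  apply: eq_bigr => j _; apply: eq_bigr => d _.
  by rewrite ZE !rmorphM /= conjCK /p1 /q1 /p2 /q2; ring.
have eK2 : K2 Z = R2 * R1^*.
  rewrite /K2 /R1 /R2 !rmorph_sum /=.
  under [X in _ = _ * X]eq_bigr => c _ do rewrite rmorph_sum /=.
  rewrite -sum_prod4; apply: eq_bigr => i _; apply: eq_bigr => c _.
  apply: eq_bigr => j _; apply: eq_bigr => d _.
  by rewrite ZE !rmorphM /= conjCK /p1 /q1 /p2 /q2; ring.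
rewrite eD1 eD2 eO1 eO2 eK1 eK2.
have key : forall p q : 'I_M -> C,
  let s := \sum_i p i * q i in let R := \sum_c \sum_j (q c)^* * (U c j * p j) in
  s^* * s^*^* + R * R^* <= dot q q * dot p p.
  move=> p q s R.
  pose x i := (p i)^*; pose y c := \sum_j U c j * p j.
  have hxx : dot x x = dot p p.
    by rewrite /dot; apply: eq_bigr => i _; rewrite /x conjCK mulrC.
  have hxy : dot x y = 0.
    rewrite -(skew0 p) /dot; apply: eq_bigr => c _; rewrite /x /y conjCK mulr_sumr.
    by apply: eq_bigr => j _; rewrite mulrA.
  have hyy : dot y y = dot x x by rewrite hxx /y unit_norm.
  have hqx : dot q x = s^*.
    rewrite /s rmorph_sum /dot; apply: eq_bigr => i _.
    by rewrite /x rmorphM /= mulrC.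
  have hqy : dot q y = R.
    by rewrite /R /dot; apply: eq_bigr => c _; rewrite /y mulr_sumr.
  by have := bessel q hxy hyy; rewrite hqx hqy hxx.
have H := scal (dot_ge0 p1) (dot_ge0 q1) (dot_ge0 p2) (dot_ge0 q2) (key p1 q1) (key p2 q2).
rewrite -/s1 -/s2 -/R1 -/R2 !conjCK in H.
have -> : dot p1 p1 * dot q2 q2 + dot p2 p2 * dot q1 q1 - s1 * s2^* - s2 * s1^* -
   R1 * R2^* - R2 * R1^* = (dot p1 p1 * dot q2 q2 + dot p2 p2 * dot q1 q1) -
   (s1 * s2^* + s2 * s1^* + (R1 * R2^* + R2 * R1^*)) by ring.
by rewrite subr_ge0.
Qed.


Lemma eqLL (i c : 'I_M) : (L i == L c) = (i == c). Proof. exact: (eq_e false i false c). Qed.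
Lemma eqRR (i c : 'I_M) : (R i == R c) = (i == c). Proof. exact: (eq_e true i true c). Qed.
Lemma eqLR (i c : 'I_M) : (L i == R c) = false. Proof. exact: (eq_e false i true c). Qed.
Lemma eqRL (i c : 'I_M) : (R i == L c) = false. Proof. exact: (eq_e true i false c). Qed.

Lemma neg_part : (0 < M)%N ->
  exists v : 'cV[C]_(n * n), (adjmx v *m Wm *m v) 0 0 < 0.
Proof.
move=> M0.
pose v : 'cV[C]_(n * n) := \col_(x < n * n) (((unidx x).1 == (unidx x).2)%:R).
exists v; rewrite qformE T_master.
set Z := _ *m adjmx _.
have ZE k a l b : Z (idx (k, a)) (idx (l, b)) = (k == a)%:R * (l == b)%:R.
  by rewrite /Z vvE !mxE !mxtens.mxtens_indexK /= conjC_nat.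
have eD1 : D1 Z = 0.
  by rewrite /D1 big1 // => i _; rewrite big1 // => c _; rewrite ZE eqLR mul0r.
have eD2 : D2 Z = 0.
  by rewrite /D2 big1 // => i _; rewrite big1 // => c _; rewrite ZE eqRL mul0r.
have eK1 : K1 Z = 0.
  rewrite /K1 big1 // => i _; rewrite big1 // => c _; rewrite big1 // => j _.
  by rewrite big1 // => d _; rewrite ZE eqLR mul0r mulr0.
have eK2 : K2 Z = 0.
  rewrite /K2 big1 // => i _; rewrite big1 // => c _; rewrite big1 // => j _.
  by rewrite big1 // => d _; rewrite ZE eqRL mul0r mulr0.
have eO1 : O1 Z = (M * M)%:R.
  rewrite /O1 (eq_bigr (fun _ => M%:R)); first by rewrite sumr_const card_ord natrM mulr_natl.
  move=> i _; rewrite (eq_bigr (fun _ => 1)); first by rewrite sumr_const card_ord.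
  by move=> j _; rewrite ZE eqLL eqRR !eqxx mulr1.
have eO2 : O2 Z = (M * M)%:R.
  rewrite /O2 (eq_bigr (fun _ => M%:R)); first by rewrite sumr_const card_ord natrM mulr_natl.
  move=> i _; rewrite (eq_bigr (fun _ => 1)); first by rewrite sumr_const card_ord.
  by move=> j _; rewrite ZE eqLL eqRR !eqxx mulr1.
rewrite eD1 eD2 eO1 eO2 eK1 eK2 add0r sub0r !subr0 -opprD !mulrN oppr_lt0.
apply: mulr_gt0; first by rewrite invr_gt0 ltr0n.
apply: mulr_gt0; first by rewrite invr_gt0 ltr0n addn_gt0 M0.
by rewrite -natrD ltr0n addn_gt0 muln_gt0 M0.
Qed.


Definition blk (k : 'I_n) : bool := if split k is inr _ then true else false.
Definition ix (k : 'I_n) : 'I_M := match split k with inl i => i | inr i => i end.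

Lemma split_e s i : split (e s i) = if s then inr i else inl i.
Proof.
case: s.
- by rewrite -[e true i]/(unsplit (inr i : 'I_M + 'I_M)) unsplitK.
- by rewrite -[e false i]/(unsplit (inl i : 'I_M + 'I_M)) unsplitK.
Qed.

Lemma blk_e s i : blk (e s i) = s. Proof. by rewrite /blk split_e; case: s. Qed.
Lemma ix_e s i : ix (e s i) = i. Proof. by rewrite /ix split_e; case: s. Qed.
Lemma blkL i : blk (L i) = false. Proof. exact: (blk_e false i). Qed.
Lemma blkR i : blk (R i) = true. Proof. exact: (blk_e true i). Qed.
Lemma ixL i : ix (L i) = i. Proof. exact: (ix_e false i). Qed.
Lemma ixR i : ix (R i) = i. Proof. exact: (ix_e true i). Qed.

Lemma eP (k : 'I_n) : k = e (blk k) (ix k).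
Proof.
rewrite /blk /ix; case: (split k) (splitK k) => i <- //.
Qed.

Definition sg (s : bool) (i : 'I_M) (t : bool) (c : 'I_M) (s' : bool) (j : 'I_M)
  (t' : bool) (d : 'I_M) : C :=
 match s, t, s', t' with
 | true, true, true, true => (i == j)%:R * (c == d)%:R * (M * M)%:R
 | false, false, false, false => (i == j)%:R * (c == d)%:R * (M * M)%:R
 | true, true, false, false => (c == i)%:R * (d == j)%:R * M%:R
 | false, false, true, true => (c == i)%:R * (d == j)%:R * M%:R
 | true, false, true, false => (i == j)%:R * (c == d)%:R * M%:R
 | false, true, false, true => (i == j)%:R * (c == d)%:R * M%:R
 | true, false, false, true => (c == i)%:R * (d == j)%:R * (-1)
 | false, true, true, false => (c == i)%:R * (d == j)%:R * (-1)
 | _, _, _, _ => 0 end.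

Definition c0 : C := ((M * M * M * M + M * M * M * M + M * M * M + M * M * M)%N%:R)^-1.

Definition rho : 'M[C]_(n * n) := \matrix_(x, y)
  (c0 * sg (blk (unidx x).1) (ix (unidx x).1) (blk (unidx x).2) (ix (unidx x).2)
           (blk (unidx y).1) (ix (unidx y).1) (blk (unidx y).2) (ix (unidx y).2)).

Lemma rhoG k a l b : rho (idx (k, a)) (idx (l, b)) =
  c0 * sg (blk k) (ix k) (blk a) (ix a) (blk l) (ix l) (blk b) (ix b).
Proof. by rewrite mxE !mxtens.mxtens_indexK. Qed.

Lemma rhoE s i t c s' j t' d :
  rho (idx (e s i, e t c)) (idx (e s' j, e t' d)) = c0 * sg s i t c s' j t' d.
Proof. by rewrite rhoG !blk_e !ix_e. Qed.

Lemma ptE (A : 'M[C]_(n * n)) k a l b :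
  ptrans A (idx (k, a)) (idx (l, b)) = A (idx (k, b)) (idx (l, a)).
Proof. by rewrite mxE !mxtens.mxtens_indexK. Qed.


Lemma quad_e (A : 'M[C]_(n * n)) (k0 : C) g (v : 'cV[C]_(n * n)) :
  (forall s i t c s' j t' d,
     A (idx (e s i, e t c)) (idx (e s' j, e t' d)) = k0 * g s i t c s' j t' d) ->
  (adjmx v *m A *m v) 0 0 = k0 *
  \sum_(s : bool) \sum_(t : bool) \sum_(s' : bool) \sum_(t' : bool)
    \sum_i \sum_c \sum_j \sum_d (g s i t c s' j t' d *
       ((v (idx (e s i, e t c)) 0)^* * v (idx (e s' j, e t' d)) 0)).
Proof.
move=> HA; rewrite qformE sum_pair.
under eq_bigr => k _ do (under eq_bigr => a _ do rewrite sum_pair).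
rewrite sum4 !mulr_sumr; apply: eq_bigr => s _; rewrite !mulr_sumr; apply: eq_bigr => t _.
rewrite !mulr_sumr; apply: eq_bigr => s' _; rewrite !mulr_sumr; apply: eq_bigr => t' _.
rewrite !mulr_sumr; apply: eq_bigr => i _; rewrite !mulr_sumr; apply: eq_bigr => c _.
rewrite !mulr_sumr; apply: eq_bigr => j _; rewrite !mulr_sumr; apply: eq_bigr => d _.
rewrite HA vvE -!mulrA; congr (_ * (_ * _)); exact: mulrC.
Qed.

Lemma sA (a : C) (G : 'I_M -> 'I_M -> 'I_M -> 'I_M -> C) :
  \sum_i \sum_c \sum_j \sum_d ((i == j)%:R * (c == d)%:R * a * G i c j d) =
  a * \sum_i \sum_c G i c i c.
Proof.
rewrite -sumD mulr_sumr; apply: eq_bigr => i _; rewrite mulr_sumr; apply: eq_bigr => c _.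
rewrite mulr_sumr; apply: eq_bigr => j _; rewrite mulr_sumr; apply: eq_bigr => d _.
by rewrite -mulrA mulrCA.
Qed.

Lemma sB (a : C) (G : 'I_M -> 'I_M -> 'I_M -> 'I_M -> C) :
  \sum_i \sum_c \sum_j \sum_d ((c == i)%:R * (d == j)%:R * a * G i c j d) =
  a * \sum_i \sum_j G i i j j.
Proof.
rewrite mulr_sumr; apply: eq_bigr => i _.
rewrite (bigD1 i) //= [X in _ + X]big1 ?addr0; last first.
  move=> c /negbTE Hc; rewrite big1 // => j _; rewrite big1 // => d _.
  by rewrite Hc !mul0r.
under eq_bigr => j _ do under eq_bigr => d _ do rewrite eqxx mulr1n mul1r.
rewrite mulr_sumr; apply: eq_bigr => j _.
rewrite (bigD1 j) //= big1 ?addr0; last by move=> d /negbTE Hd; rewrite Hd !mul0r.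
by rewrite eqxx mulr1n mul1r.
Qed.

Lemma sC (a : C) (G : 'I_M -> 'I_M -> 'I_M -> 'I_M -> C) :
  \sum_i \sum_c \sum_j \sum_d ((i == j)%:R * (d == c)%:R * a * G i c j d) =
  a * \sum_i \sum_c G i c i c.
Proof.
rewrite -sA; apply: eq_bigr => i _; apply: eq_bigr => c _.
apply: eq_bigr => j _; apply: eq_bigr => d _; by rewrite (eq_sym d).
Qed.

Lemma sD (a : C) (G : 'I_M -> 'I_M -> 'I_M -> 'I_M -> C) :
  \sum_i \sum_c \sum_j \sum_d ((d == i)%:R * (c == j)%:R * a * G i c j d) =
  a * \sum_i \sum_c G i c c i.
Proof.
rewrite mulr_sumr; apply: eq_bigr => i _.
rewrite mulr_sumr; apply: eq_bigr => c _.
rewrite (bigD1 c) //= [X in _ + X]big1 ?addr0; last first.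
  by move=> j /negbTE Hj; rewrite big1 // => d _; rewrite (eq_sym c) Hj mulr0 !mul0r.
under eq_bigr => d _ do rewrite eqxx mulr1n mulr1.
rewrite (bigD1 i) //= big1 ?addr0; last by move=> d /negbTE Hd; rewrite Hd !mul0r.
by rewrite eqxx mulr1n mul1r.
Qed.


Lemma sg_herm s i t c s' j t' d : (sg s' j t' d s i t c)^* = sg s i t c s' j t' d.
Proof.
case: s; case: t; case: s'; case: t' => /=;
  rewrite ?rmorph0 ?rmorphM /= ?rmorphN /= ?rmorph1 ?conjC_nat //.
all: first [by rewrite (eq_sym j i) (eq_sym d c) | by rewrite [(d == j)%:R * _]mulrC].
Qed.

Lemma c0_real : c0^* = c0.
Proof. by rewrite /c0 fmorphV /= conjC_nat. Qed.

Lemma adjE (A : 'M[C]_(n * n)) x y : adjmx A x y = (A y x)^*.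
Proof. by rewrite !mxE. Qed.

Lemma rho_herm : adjmx rho = rho.
Proof.
apply/matrixP => x y; rewrite adjE.
rewrite -[x]mxtens.mxtens_unindexK -[y]mxtens.mxtens_unindexK.
case: (unidx x) => k a; case: (unidx y) => l b.
by rewrite !rhoG rmorphM /= c0_real sg_herm.
Qed.

Lemma rhoT_herm : adjmx (ptrans rho) = ptrans rho.
Proof.
apply/matrixP => x y; rewrite adjE.
rewrite -[x]mxtens.mxtens_unindexK -[y]mxtens.mxtens_unindexK.
case: (unidx x) => k a; case: (unidx y) => l b.
by rewrite !ptE !rhoG rmorphM /= c0_real sg_herm.
Qed.


Lemma c0_ge0 : 0 <= c0.
Proof. by rewrite invr_ge0 ler0n. Qed.

Definition Qf (f : 'I_M -> 'I_M -> C) := \sum_i \sum_c (f i c)^* * f i c.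

Lemma Qf_ge0 f : 0 <= Qf f.
Proof. by apply: sumr_ge0 => i _; apply: sumr_ge0 => c _; rewrite mulrC mul_conjC_ge0. Qed.

Lemma cs_diag (f : 'I_M -> 'I_M -> C) :
  (\sum_i f i i)^* * (\sum_i f i i) <= M%:R * Qf f.
Proof.
apply: le_trans (cs_sum (fun i => f i i)) _.
apply: ler_wpM2l; first exact: ler0n.
apply: ler_sum => i _.
by rewrite (bigD1 i) //= lerDl; apply: sumr_ge0 => c _; rewrite mulrC mul_conjC_ge0.
Qed.

Lemma cross (f g : 'I_M -> 'I_M -> C) :
  \sum_i \sum_j (f i i)^* * g j j = (\sum_i f i i)^* * (\sum_j g j j).
Proof. by rewrite sum_prod rmorph_sum. Qed.

Lemma rho_ineq (fRR fRL fLR fLL : 'I_M -> 'I_M -> C) :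
  0 <= (M * M)%:R * Qf fRR + M%:R * \sum_i \sum_j (fRR i i)^* * fLL j j +
    (M%:R * Qf fRL + -1 * \sum_i \sum_j (fRL i i)^* * fLR j j) +
    (-1 * \sum_i \sum_j (fLR i i)^* * fRL j j + M%:R * Qf fLR +
     (M%:R * \sum_i \sum_j (fLL i i)^* * fRR j j + (M * M)%:R * Qf fLL)).
Proof.
rewrite !cross.
set a := \sum_i fRR i i; set b := \sum_i fLL i i.
set u := \sum_i fRL i i; set w := \sum_i fLR i i.
have hRR := cs_diag fRR; have hLL := cs_diag fLL.
have hRL := cs_diag fRL; have hLR := cs_diag fLR.
rewrite -/a in hRR; rewrite -/b in hLL; rewrite -/u in hRL; rewrite -/w in hLR.
have -> : (M * M)%:R * Qf fRR + M%:R * (a^* * b) + (M%:R * Qf fRL + -1 * (u^* * w)) +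
    (-1 * (w^* * u) + M%:R * Qf fLR + (M%:R * (b^* * a) + (M * M)%:R * Qf fLL)) =
  M%:R * (M%:R * Qf fRR - a^* * a) + M%:R * (M%:R * Qf fLL - b^* * b) +
  (M%:R * Qf fRL - u^* * u) + (M%:R * Qf fLR - w^* * w) +
  M%:R * ((a + b) * (a + b)^*) + (u - w) * (u - w)^*.
  rewrite rmorphD rmorphB /= natrM; ring.
have M0 : 0 <= M%:R :> C by exact: ler0n.
have g1 : 0 <= M%:R * (M%:R * Qf fRR - a^* * a) by apply: mulr_ge0 => //; rewrite subr_ge0.
have g2 : 0 <= M%:R * (M%:R * Qf fLL - b^* * b) by apply: mulr_ge0 => //; rewrite subr_ge0.
have g3 : 0 <= M%:R * Qf fRL - u^* * u by rewrite subr_ge0.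
have g4 : 0 <= M%:R * Qf fLR - w^* * w by rewrite subr_ge0.
have g5 : 0 <= M%:R * ((a + b) * (a + b)^*) by apply: mulr_ge0 => //; apply: mul_conjC_ge0.
have g6 : 0 <= (u - w) * (u - w)^* by apply: mul_conjC_ge0.
apply: addr_ge0 g6; apply: addr_ge0 g5; apply: addr_ge0 g4; apply: addr_ge0 g3.
exact: addr_ge0 g1 g2.
Qed.

Lemma rho_quad (v : 'cV[C]_(n * n)) : 0 <= (adjmx v *m rho *m v) 0 0.
Proof.
rewrite (@quad_e rho c0 sg v rhoE).
apply: mulr_ge0; first exact: c0_ge0.
rewrite !big_bool /= !sum0mul !add0r !addr0 !sA !sB.
exact: (rho_ineq (fun i c => v (idx (R i, R c)) 0) (fun i c => v (idx (R i, L c)) 0)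
   (fun i c => v (idx (L i, R c)) 0) (fun i c => v (idx (L i, L c)) 0)).
Qed.


Definition Pf (f g : 'I_M -> 'I_M -> C) := \sum_i \sum_c (f i c)^* * g c i.

Lemma sq_gen (z : C) (f1 f2 : 'I_M -> 'I_M -> C) : z^* = z -> z * z = 1 ->
  \sum_i \sum_c (f1 i c + z * f2 c i)^* * (f1 i c + z * f2 c i) =
  Qf f1 + Qf f2 + z * Pf f1 f2 + z * Pf f2 f1.
Proof.
move=> zr zz.
rewrite (eq_bigr (fun i => \sum_c ((f1 i c)^* * f1 i c + (f2 c i)^* * f2 c i +
   z * ((f1 i c)^* * f2 c i) + z * ((f2 c i)^* * f1 i c)))); last first.
  move=> i _; apply: eq_bigr => c _; rewrite rmorphD rmorphM /= zr.
  have -> : (f1 i c)^* * f1 i c + (f2 c i)^* * f2 c i = (f1 i c)^* * f1 i c + (z * z) * ((f2 c i)^* * f2 c i) by rewrite zz mul1r.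
  ring.
under eq_bigr => i _ do rewrite !big_split /= -!mulr_sumr.
rewrite !big_split /= -!mulr_sumr.
congr (_ + _ + z * _ + z * _).
- by rewrite /Qf exchange_big.
- by rewrite /Pf exchange_big.
Qed.

Lemma rhoT_ineq (a g h b : 'I_M -> 'I_M -> C) : (0 < M)%N ->
  0 <= (M * M)%:R * Qf a + -1 * Pf a b + (M%:R * Qf g + M%:R * Pf g h) +
    (M%:R * Pf h g + M%:R * Qf h + (-1 * Pf b a + (M * M)%:R * Qf b)).
Proof.
move=> M0.
have e1 := @sq_gen (-1) a b; rewrite rmorphN rmorph1 mulN1r opprK in e1.
have e2 := @sq_gen 1 g h; rewrite rmorph1 mul1r in e2.
have e1' := e1 erefl erefl; have e2' := e2 erefl erefl.
have p1 : 0 <= Qf a + Qf b + -1 * Pf a b + -1 * Pf b a.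
  by rewrite -e1'; apply: sumr_ge0 => i _; apply: sumr_ge0 => c _; rewrite mulrC mul_conjC_ge0.
have p2 : 0 <= Qf g + Qf h + 1 * Pf g h + 1 * Pf h g.
  by rewrite -e2'; apply: sumr_ge0 => i _; apply: sumr_ge0 => c _; rewrite mulrC mul_conjC_ge0.
have pM : 0 <= (M * M)%:R - 1 :> C.
  by rewrite subr_ge0 ler1n muln_gt0 M0.
have -> : (M * M)%:R * Qf a + -1 * Pf a b + (M%:R * Qf g + M%:R * Pf g h) +
    (M%:R * Pf h g + M%:R * Qf h + (-1 * Pf b a + (M * M)%:R * Qf b)) =
    ((M * M)%:R - 1) * (Qf a + Qf b) + (Qf a + Qf b + -1 * Pf a b + -1 * Pf b a) +
    M%:R * (Qf g + Qf h + 1 * Pf g h + 1 * Pf h g) by ring.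
apply: addr_ge0; last by apply: mulr_ge0 => //; exact: ler0n.
apply: addr_ge0 p1; apply: mulr_ge0 => //; exact: addr_ge0 (Qf_ge0 a) (Qf_ge0 b).
Qed.

Lemma rhoT_quad (v : 'cV[C]_(n * n)) : (0 < M)%N -> 0 <= (adjmx v *m ptrans rho *m v) 0 0.
Proof.
move=> M0.
rewrite (@quad_e (ptrans rho) c0 (fun s i t c s' j t' d => sg s i t' d s' j t c) v);
  last by move=> *; rewrite ptE rhoE.
apply: mulr_ge0; first exact: c0_ge0.
rewrite !big_bool /= !sum0mul !add0r !addr0 !sC !sD.
exact: (rhoT_ineq (fun i c => v (idx (R i, R c)) 0) (fun i c => v (idx (R i, L c)) 0)
   (fun i c => v (idx (L i, R c)) 0) (fun i c => v (idx (L i, L c)) 0) M0).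
Qed.


Lemma sum_const2 (k : C) : \sum_(i < M) \sum_(c < M) k = (M * M)%:R * k.
Proof. by rewrite sumr_const sumr_const card_ord -mulrnA mulr_natl. Qed.

Lemma c0_gt0 : (0 < M)%N -> 0 < c0.
Proof. by move=> M0; rewrite invr_gt0 ltr0n !addn_gt0 !muln_gt0 M0. Qed.

Hypothesis hrow : forall i : 'I_M, \sum_j U i j * (U i j)^* = 1.

Lemma rho_W : (0 < M)%N -> \tr (Wm *m rho) < 0.
Proof.
move=> M0.
rewrite trE T_master.
have eD1 : D1 rho = (M * M)%:R * (c0 * M%:R).
  rewrite /D1 -sum_const2; apply: eq_bigr => i _; apply: eq_bigr => c _.
  by rewrite rhoG !blkL !blkR !ixL !ixR /= !eqxx !mulr1n !mul1r.
have eD2 : D2 rho = (M * M)%:R * (c0 * M%:R).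
  rewrite /D2 -sum_const2; apply: eq_bigr => i _; apply: eq_bigr => c _.
  by rewrite rhoG !blkL !blkR !ixL !ixR /= !eqxx !mulr1n !mul1r.
have eO1 : O1 rho = (M * M)%:R * (c0 * M%:R).
  rewrite /O1 -sum_const2; apply: eq_bigr => i _; apply: eq_bigr => c _.
  by rewrite rhoG !blkL !blkR !ixL !ixR /= !eqxx !mulr1n !mul1r.
have eO2 : O2 rho = (M * M)%:R * (c0 * M%:R).
  rewrite /O2 -sum_const2; apply: eq_bigr => i _; apply: eq_bigr => c _.
  by rewrite rhoG !blkL !blkR !ixL !ixR /= !eqxx !mulr1n !mul1r.
have rowsum : \sum_i \sum_j U i j * (U j i)^* = - M%:R.
  rewrite (eq_bigr (fun _ => -1)); first by rewrite sumr_const card_ord mulNrn.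
  move=> i _; rewrite -(hrow i) -sumrN; apply: eq_bigr => j _.
  by rewrite (hskew i j) rmorphN /= mulrN.
have eK1 : K1 rho = c0 * M%:R.
  rewrite /K1 (eq_bigr (fun i => \sum_c \sum_j \sum_d
     ((c == i)%:R * (d == j)%:R * (- c0) * (U c j * (U d i)^*)))); last first.
    move=> i _; apply: eq_bigr => c _; apply: eq_bigr => j _; apply: eq_bigr => d _.
    rewrite rhoG !blkL !blkR !ixL !ixR /=; ring.
  by rewrite sB rowsum mulrNN.
have eK2 : K2 rho = c0 * M%:R.
  rewrite /K2 (eq_bigr (fun i => \sum_c \sum_j \sum_d
     ((c == i)%:R * (d == j)%:R * (- c0) * (U c j * (U d i)^*)))); last first.
    move=> i _; apply: eq_bigr => c _; apply: eq_bigr => j _; apply: eq_bigr => d _.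
    rewrite rhoG !blkL !blkR !ixL !ixR /=; ring.
  by rewrite sB rowsum mulrNN.
rewrite eD1 eD2 eO1 eO2 eK1 eK2.
have -> : (M * M)%:R * (c0 * M%:R) + (M * M)%:R * (c0 * M%:R) - (M * M)%:R * (c0 * M%:R) -
   (M * M)%:R * (c0 * M%:R) - c0 * M%:R - c0 * M%:R = - (c0 * M%:R *+ 2) by rewrite mulr2n; ring.
rewrite !mulrN oppr_lt0.
apply: mulr_gt0; first by rewrite invr_gt0 ltr0n.
apply: mulr_gt0; first by rewrite invr_gt0 ltr0n addn_gt0 M0.
by rewrite pmulrn_rgt0 // mulr_gt0 ?c0_gt0 // ltr0n.
Qed.


Lemma sg_diag s i t c : sg s i t c s i t c = if s == t then (M * M)%:R else M%:R.
Proof. by case: s; case: t; rewrite /= !eqxx !mulr1n !mul1r. Qed.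

Lemma sum2 (G : 'I_n -> 'I_n -> C) :
  \sum_k \sum_a G k a = \sum_(s : bool) \sum_(t : bool) \sum_i \sum_c G (e s i) (e t c).
Proof.
rewrite sum_be; apply: eq_bigr => s _.
under eq_bigr => i _ do rewrite sum_be.
by rewrite exchange_big.
Qed.

Lemma rho_tr : (0 < M)%N -> \tr rho = 1.
Proof.
move=> M0.
rewrite /mxtrace sum_pair sum2.
rewrite (eq_bigr (fun s => \sum_(t : bool) (M * M)%:R * (c0 * if s == t then (M * M)%:R else M%:R))); last first.
  move=> s _; apply: eq_bigr => t _; rewrite -sum_const2; apply: eq_bigr => i _.
  by apply: eq_bigr => c _; rewrite rhoE sg_diag.
rewrite !big_bool /=.
transitivity (c0 * (M * M * M * M + M * M * M * M + M * M * M + M * M * M)%N%:R).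
  by rewrite !natrD !natrM; ring.
by rewrite /c0 mulVf // pnatr_eq0 -lt0n !addn_gt0 !muln_gt0 M0.
Qed.

End Main.
End Aux.
Import Aux.

Theorem proposition2 (C : numClosedFieldType) (N : nat) (U : 'M[C]_(N.*2)) :
  (1 <= N)%N ->
  U \is unitarymx ->
  U^T = - U ->
  let W := id_tens (PhiU U) (Pplus (N.*2 + N.*2)) in
  (forall psi phi : 'cV[C]_(N.*2 + N.*2),
      0 <= (adjmx (psi *t phi) *m W *m (psi *t phi)) 0 0)
  /\ ~ psdmx W
  /\ exists rho : 'M[C]_((N.*2 + N.*2) * (N.*2 + N.*2)),
       densitymx rho /\ psdmx (ptrans rho) /\ \tr (W *m rho) < 0.
Proof.
move=> N1 Uu UT W.
have M0 : (0 < N.*2)%N by rewrite double_gt0.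
have hskew : forall i j, U j i = - U i j.
  by move=> i j; have := congr1 (fun A : 'M[C]_(N.*2) => A i j) UT; rewrite !mxE.
have hrow : forall i, \sum_j U i j * (U i j)^* = 1.
  move=> i; have := congr1 (fun A : 'M[C]_(N.*2) => A i i) (unitarymxP Uu).
  rewrite !mxE eqxx mulr1n => <-; apply: eq_bigr => j _; by rewrite !mxE.
have hcol : forall j k, \sum_c (U c j)^* * U c k = (j == k)%:R.
  move=> j k; have := congr1 (fun A : 'M[C]_(N.*2) => A j k) (mulmxKtV (1%:M) Uu erefl).
  rewrite mul1mx !mxE => <-; apply: eq_bigr => c _; by rewrite !mxE.
split; first by move=> psi phi; exact: (pos_part hskew hcol).
split.
  case=> _ Hpsd; have [v Hv] := neg_part U M0.
  by have := le_lt_trans (Hpsd v) Hv; rewrite ltxx.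
exists (rho C N.*2); split; first by split; [split; [exact: rho_herm | exact: rho_quad] | exact: rho_tr].
split; first by split; [exact: rhoT_herm | move=> v; exact: rhoT_quad].
exact: (rho_W hskew hrow M0).
Qed.
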